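(* On $T^*\mathrm{Eng}(n)$, for all $i,j\in\{1,\dots,n\}$ with $i\neq j$ and all $N\in\{1,\dots,n\}$, the functions $L_{ij}$ and $C_N$ are prime integrals of the normal Hamiltonian flow, i.e. $\{L_{ij},H\}=0$ and $\{C_N,H\}=0$.
   Context: $\mathrm{Eng}(n)$ is the simply connected Lie group with Lie algebra basis $X_1,\dots,X_n,Y_0,\dots,Y_{n+1}$ whose only nontrivial brackets (up to antisymmetry) are $[X_i,Y_0]=Y_i$ and $[X_i,Y_i]=Y_{n+1}$, $i=1,\dots,n$; all are viewed as left-invariant vector fields. For a vector field $X$, $P_X\in C^\infty(T^*\mathrm{Eng}(n))$ is $P_X(\lambda)=\langle\lambda,X\rangle$. The normal Hamiltonian is $H=\frac12\big(\sum_{i=1}^nP_{X_i}^2+P_{Y_0}^2\big)$ (the paper's statement is insensitive to the constant factor). Poisson brackets on $T^*\mathrm{Eng}(n)$ (canonical symplectic form) are normalized so that $\{P_X,P_Y\}=P_{[X,Y]}$ for left-invariant $X,Y$. Define $L_{ij}:=P_{X_i}P_{Y_j}-P_{X_j}P_{Y_i}$ and $C_N:=\frac12\sum_{i,j\in\{1,\dots,N\},\,i\neq j}L_{ij}^2$. *)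

(* Defs.v *)
From HB Require Import structures.
From mathcomp Require Import all_boot all_order all_algebra.
From mathcomp Require Import mpoly.
Set Implicit Arguments. Unset Strict Implicit. Unset Printing Implicit Defensive.
Import Order.TTheory GRing.Theory Num.Theory.
Local Open Scope ring_scope.

(* Fibre coordinates on T^*Eng(n) in the left trivialisation: the momentum
   functions P_Z for the basis Z of the Lie algebra, with dimension
   d = (n + n).+2 = 2n+2.  Index convention (0-based ordinals):
     X_i  (1 <= i <= n)   |-> index i - 1
     Y_k  (0 <= k <= n+1) |-> index n + k.
   A polynomial in these variables is a polynomial function of the P_Z. *)
Definition dimEng (n : nat) : nat := (n + n).+2.

Section Eng.
Variables (R : realFieldType) (n : nat).
Local Notation d := (dimEng n).
Local Notation P := {mpoly R[d]}.

Definition PX (i : nat) : P := 'X_(inord (i.-1)).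
Definition PY (k : nat) : P := 'X_(inord (n + k)).

(* P_{[e_a, e_b]} for basis vectors e_a, e_b:
   [X_i, Y_0] = Y_i, [X_i, Y_i] = Y_{n+1} (i = 1..n), antisymmetry, others 0. *)
Definition lieP (a b : 'I_d) : P :=
  if (a < n)%N && (nat_of_ord b == n) then PY a.+1
  else if (a < n)%N && (nat_of_ord b == n + a.+1)%N then PY n.+1
  else if (b < n)%N && (nat_of_ord a == n) then - PY b.+1
  else if (b < n)%N && (nat_of_ord a == n + b.+1)%N then - PY n.+1
  else 0.

(* Poisson bracket (canonical symplectic form on T^*Eng(n)) restricted to
   functions of the momenta P_Z: the Leibniz extension of
   {P_X, P_Y} = P_{[X,Y]}, i.e. {f,g} = sum_{a,b} d_a f d_b g P_{[e_a,e_b]}. *)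
Definition poisson (f g : P) : P :=
  \sum_(a < d) \sum_(b < d) (mderiv a f * mderiv b g * lieP a b).

Definition Hnormal : P :=
  2^-1 *: (\sum_(1 <= i < n.+1) PX i ^+ 2 + PY 0 ^+ 2).

Definition Lij (i j : nat) : P := PX i * PY j - PX j * PY i.

Definition CN (N : nat) : P :=
  2^-1 *: (\sum_(1 <= i < N.+1) \sum_(1 <= j < N.+1 | i != j) Lij i j ^+ 2).

End Eng.

(* Main.v *)
Require Import Defs.
From HB Require Import structures.
From mathcomp Require Import all_boot all_order all_algebra.
From mathcomp Require Import mpoly.
From mathcomp Require Import ring zify.
Import Order.TTheory GRing.Theory Num.Theory.
Local Open Scope ring_scope.

Section Proof.
Variables (R : realFieldType) (n : nat).
Local Notation d := (dimEng n).
Local Notation P := {mpoly R[d]}.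

Definition Gen (w : 'I_d -> P) (f : P) : P := \sum_(a < d) mderiv a f * w a.

Lemma mderivXU (i j : 'I_d) : mderiv i ('X_j : P) = (j == i)%:R.
Proof.
rewrite mderivX mnm1E; case: eqP => [->|_]; last by rewrite scale0r.
have -> : (U_(i) - U_(i))%MM = 0%MM by apply/mnmP => k; rewrite mnmBE mnm0E subnn.
by rewrite mpolyX0 scale1r.
Qed.

Lemma GenD w f g : Gen w (f + g) = Gen w f + Gen w g.
Proof. by rewrite /Gen -big_split; apply: eq_bigr => a _; rewrite mderivD mulrDl. Qed.

Lemma GenB w f g : Gen w (f - g) = Gen w f - Gen w g.
Proof. by rewrite /Gen -sumrB; apply: eq_bigr => a _; rewrite mderivB mulrBl. Qed.

Lemma Gen0 w : Gen w 0 = 0.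
Proof. by rewrite /Gen big1 // => a _; rewrite mderiv0 mul0r. Qed.

Lemma GenZ w c f : Gen w (c *: f) = c *: Gen w f.
Proof. by rewrite /Gen scaler_sumr; apply: eq_bigr => a _; rewrite mderivZ scalerAl. Qed.

Lemma GenM w f g : Gen w (f * g) = Gen w f * g + f * Gen w g.
Proof.
rewrite /Gen mulr_suml mulr_sumr -big_split; apply: eq_bigr => a _.
rewrite /= mderivM; ring.
Qed.

Lemma GenX w c : Gen w 'X_c = w c.
Proof.
rewrite /Gen (bigD1 c) //= mderivXU eqxx mul1r big1 ?addr0 // => a /negPf.
by rewrite eq_sym mderivXU => ->; rewrite mul0r.
Qed.

Lemma Gensum w (I : Type) (r : seq I) (Q : pred I) (F : I -> P) :
  Gen w (\sum_(i <- r | Q i) F i) = \sum_(i <- r | Q i) Gen w (F i).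
Proof. exact: (big_morph _ (GenD w) (Gen0 w)). Qed.

Definition cf (a : 'I_d) : P := Gen (fun b => lieP R a b) (Hnormal R n).

Lemma DE f : poisson f (Hnormal R n) = Gen cf f.
Proof.
rewrite /poisson /Gen; apply: eq_bigr => a _; rewrite /cf /Gen big_distrr.
by apply: eq_bigr => b _; rewrite /= mulrA.
Qed.

Lemma cfE a : cf a = 2^-1 *: (\sum_(1 <= i < n.+1)
    (lieP R a (inord i.-1) * PX R n i + PX R n i * lieP R a (inord i.-1))
   + (lieP R a (inord (n + 0)) * PY R n 0 + PY R n 0 * lieP R a (inord (n+0)))).
Proof.
rewrite /cf /Hnormal GenZ GenD Gensum !expr2 GenM; congr (_ *: (_ + _)).
  by apply: eq_bigr => i _; rewrite GenM /PX GenX.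
by rewrite /PY GenX.
Qed.

Lemma lie_xx k i : (1 <= k <= n)%N -> (1 <= i <= n)%N ->
  lieP R (inord k.-1 : 'I_d) (inord i.-1) = 0.
Proof.
move=> hk hi; rewrite /lieP !inordK /dimEng; try lia.
by repeat (case: ifP => ?; first (exfalso; lia)).
Qed.

Lemma lie_xy0 k : (1 <= k <= n)%N ->
  lieP R (inord k.-1 : 'I_d) (inord (n + 0)) = PY R n k.
Proof.
move=> hk; rewrite /lieP !inordK /dimEng; try lia.
case: ifP => ?; last (exfalso; lia).
rewrite prednK //; lia.
Qed.

Lemma lie_yx k i : (1 <= k <= n)%N -> (1 <= i <= n)%N ->
  lieP R (inord (n + k) : 'I_d) (inord i.-1) = if i == k then - PY R n n.+1 else 0.
Proof.
move=> hk hi; rewrite /lieP !inordK /dimEng; try lia.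
by repeat (case: ifP => ?; try (exfalso; lia)).
Qed.

Lemma lie_yy0 k : (1 <= k <= n)%N ->
  lieP R (inord (n + k) : 'I_d) (inord (n + 0)) = 0.
Proof.
move=> hk; rewrite /lieP !inordK /dimEng; try lia.
by repeat (case: ifP => ?; first (exfalso; lia)).
Qed.

Lemma half2 (y : P) : 2^-1 *: (y + y) = y.
Proof. by rewrite -mulr2n -scaler_nat scalerA mulVf ?scale1r // pnatr_eq0. Qed.

Lemma cf_x k : (1 <= k <= n)%N -> cf (inord k.-1) = PY R n 0 * PY R n k.
Proof.
move=> hk; rewrite cfE (eq_big_nat _ _ (F2 := fun _ => 0)) => [|i hi]; last first.
  by rewrite lie_xx ?mul0r ?mulr0 ?addr0 //; lia.
rewrite big1_eq add0r lie_xy0 // -[RHS]half2; congr (_ *: (_ + _)); exact: mulrC.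
Qed.

Lemma cf_y k : (1 <= k <= n)%N -> cf (inord (n + k)) = - (PX R n k * PY R n n.+1).
Proof.
move=> hk; rewrite cfE lie_yy0 // mul0r mulr0 addr0.
rewrite (eq_big_nat _ _ (F2 := fun i => if i == k then
   (- PY R n n.+1 * PX R n i + PX R n i * - PY R n n.+1) else 0)) => [|i hi]; last first.
  by rewrite lie_yx; [case: eqP => _; rewrite ?mul0r ?mulr0 ?addr0|lia|lia].
rewrite -big_mkcond big_nat1_eq ifT; last lia.
by rewrite addr0 -[RHS]half2 mulrN mulNr [PX R n k * _]mulrC.
Qed.

Lemma DL i j : (1 <= i <= n)%N -> (1 <= j <= n)%N ->
  poisson (Lij R n i j) (Hnormal R n) = 0.
Proof.
move=> hi hj; rewrite DE /Lij GenB !GenM /PX /PY !GenX.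
rewrite (@cf_x i hi) (@cf_x j hj) (@cf_y i hi) (@cf_y j hj) /PX /PY.
ring.
Qed.
End Proof.

Theorem lemma7 (R : realFieldType) (n : nat) :
  (forall i j : nat, (1 <= i <= n)%N -> (1 <= j <= n)%N -> i != j ->
     poisson (Lij R n i j) (Hnormal R n) = 0) /\
  (forall N : nat, (1 <= N <= n)%N ->
     poisson (CN R n N) (Hnormal R n) = 0).
Proof.
split; first by move=> i j hi hj _; exact: DL.
move=> N hN; rewrite DE /CN GenZ Gensum big1_seq ?scaler0 // => i /andP[_ hi].
rewrite Gensum big1_seq // => j /andP[_ hj].
move: hi hj; rewrite !mem_index_iota => hi hj.
by rewrite expr2 GenM -DE DL ?mul0r ?mulr0 ?addr0 //; lia.
Qed.
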